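(* Let $\Phi$ be an $e$-dimensional formal group law over $k$, $m\in\mathbb N_{>0}\cup\{\infty\}$, and let $K\subseteq L$ be an extension of $\Phi[m]$-fields. If $K$ is strict, i.e. $C_K=K^p$, then the field extension $K\subseteq L$ is separable.
   Context: $k$ is a field of characteristic $p>0$. For a $k$-algebra $R$, $R[\bar v]:=R[X_1,\dots,X_e]/(X_1^{p^m},\dots,X_e^{p^m})$ ($R[[\bar X]]$ if $m=\infty$); $\bar w$ is a second $e$-tuple of $m$-truncated variables. $\Phi[m]\in(k[\bar v,\bar w])^e$ is the image of $\Phi(\bar X,\bar Y)$ under $X_i\mapsto v_i,Y_i\mapsto w_i$. An $m$-truncated $e$-dimensional HS-derivation on $R$ over $k$ is a family $(D_{\mathbf i}:R\to R)_{\mathbf i\in\{0,\dots,p^m-1\}^e}$ with $r\mapsto\sum D_{\mathbf i}(r)\bar v^{\mathbf i}$ a $k$-algebra homomorphism $R\to R[\bar v]$ and $D_{\mathbf 0}=\mathrm{id}$; it is an $F$-derivation if $\sum_{\mathbf i,\mathbf j}D_{\mathbf j}(D_{\mathbf i}(r))\bar v^{\mathbf i}\bar w^{\mathbf j}=\sum_{\mathbf i}D_{\mathbf i}(r)F(\bar v,\bar w)^{\mathbf i}$ for all $r$. An $F$-field is a field containing $k$ with an $F$-derivation; an extension of $F$-fields $K\subseteq L$ means $D^L_{\mathbf i}|_K=D^K_{\mathbf i}$ for all $\mathbf i$. $C_K:=\bigcap_{l=1}^e\ker D_{\varepsilon_l}$ ($\varepsilon_l$ the $l$-th unit vector). *)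

(* Defs.v *)
From HB Require Import structures.
From mathcomp Require Import all_boot all_order all_algebra.
Set Implicit Arguments.
Unset Strict Implicit.
Unset Printing Implicit Defensive.
Import GRing.Theory.
Local Open Scope ring_scope.

(** Multi-indices in n variables. *)
Definition mi (n : nat) := {ffun 'I_n -> nat}.
Definition mi0 n : mi n := [ffun => 0%N].
Definition mi_unit n (j : 'I_n) : mi n := [ffun i => nat_of_bool (i == j)].
Definition mi_deg n (c : mi n) : nat := (\sum_(i < n) c i)%N.
Definition mi_le n (a c : mi n) : bool := [forall i, (a i <= c i)%N].
Definition mi_sub n (c a : mi n) : mi n := [ffun i => (c i - a i)%N].
Definition mi_of n B (a : {ffun 'I_n -> 'I_B}) : mi n := [ffun i => nat_of_ord (a i)].
(** (a,b) as a multi-index in the 2n variables (X_1..X_n, Y_1..Y_n). *)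
Definition mi_pair n (a b : mi n) : mi (n + n) :=
  [ffun j => match split j with inl i => a i | inr i => b i end].

(** Formal power series in n variables, as coefficient functions. *)
Definition ps (R : Type) n := mi n -> R.

Section PS.
Variable R : nzRingType.

Definition psone n : ps R n := fun c => if [forall i, c i == 0%N] then 1 else 0.
Definition psvar n (j : 'I_n) : ps R n := fun c => if c == mi_unit j then 1 else 0.
Definition psmul n (f g : ps R n) : ps R n := fun c =>
  \sum_(a : {ffun 'I_n -> 'I_(mi_deg c).+1} | mi_le (mi_of a) c)
     f (mi_of a) * g (mi_sub c (mi_of a)).
Definition psexp n (f : ps R n) (j : nat) : ps R n := iter j (psmul f) (@psone n).
Definition psmonom m n (H : 'I_m -> ps R n) (a : mi m) : ps R n :=
  \big[@psmul n/@psone n]_(j < m) psexp (H j) (a j).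
(** Substitution G(H_1,...,H_m), valid when all H_j have zero constant term
    (then only monomials a with |a| <= |c| contribute to the coefficient c). *)
Definition pssubst m n (G : ps R m) (H : 'I_m -> ps R n) : ps R n := fun c =>
  \sum_(a : {ffun 'I_m -> 'I_(mi_deg c).+1}) G (mi_of a) * psmonom H (mi_of a) c.
Definition pspair m n (A B : 'I_m -> ps R n) : 'I_(m + m) -> ps R n :=
  fun j => match split j with inl i => A i | inr i => B i end.

(** e-dimensional formal group law Phi(X,Y) (variables X = first block,
    Y = second block of 'I_(e+e)):  Phi(X,Y) = X + Y mod deg 2, and
    Phi(Phi(X,Y),Z) = Phi(X,Phi(Y,Z)). *)
Definition is_FGL e (Phi : 'I_e -> ps R (e + e)) : Prop :=
  [/\ (forall l, Phi l (mi0 _) = 0),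
      (forall l (j : 'I_(e + e)),
          Phi l (mi_unit j) = if (j == lshift e l) || (j == rshift e l) then 1 else 0) &
      (forall l (c : mi (e + e + e)),
        pssubst (Phi l)
          (pspair (fun i => pssubst (Phi i)
                              (pspair (fun i' => psvar (lshift e (lshift e i')))
                                      (fun i' => psvar (lshift e (rshift e i')))))
                  (fun i => psvar (rshift (e + e) i))) c
        =
        pssubst (Phi l)
          (pspair (fun i => psvar (lshift e (lshift e i)))
                  (fun i => pssubst (Phi i)
                              (pspair (fun i' => psvar (lshift e (rshift e i')))
                                      (fun i' => psvar (rshift (e + e) i'))))) c)].
End PS.

(** m : None = infinity, Some t = t-truncated; indices i with all i_l < p^t. *)
Definition inrange (p : nat) (m : option nat) n (i : mi n) : bool :=
  match m with Some t => [forall l, (i l < p ^ t)%N] | None => true end.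

(** m-truncated e-dimensional HS-derivation on K over k (k-structure via iK). *)
Definition is_HS (k K : fieldType) (iK : {rmorphism k -> K}) (p : nat) (m : option nat)
    e (D : mi e -> K -> K) : Prop :=
  (forall x, D (mi0 e) x = x) /\
  forall i, inrange p m i ->
   [/\ forall x y, D i (x + y) = D i x + D i y,
       forall c x, D i (iK c * x) = iK c * D i x,
       D i 1 = (if i == mi0 e then 1 else 0) &
       forall x y, D i (x * y) =
         \sum_(j : {ffun 'I_e -> 'I_(mi_deg i).+1} | mi_le (mi_of j) i)
            D (mi_of j) x * D (mi_sub i (mi_of j)) y].

(** Phi[m]-derivation: coefficientwise form of
    sum_{i,j} D_j(D_i r) v^i w^j = sum_i D_i(r) Phi(v,w)^i  in K[v,w]:
    coefficient of v^a w^b.  Terms with some i_l > |a|+|b| vanish since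
    Phi has zero constant term, so the sum is restricted to those. *)
Definition is_Fder (k K : fieldType) (iK : {rmorphism k -> K}) (p : nat) (m : option nat)
    e (Phi : 'I_e -> ps k (e + e)) (D : mi e -> K -> K) : Prop :=
  is_HS iK p m D /\
  forall a b : mi e, inrange p m a -> inrange p m b -> forall x,
    D b (D a x) =
    \sum_(i : {ffun 'I_e -> 'I_(mi_deg a + mi_deg b).+1} | inrange p m (mi_of i))
       iK (psmonom Phi (mi_of i) (mi_pair a b)) * D (mi_of i) x.

Definition strict (K : fieldType) (p : nat) e (D : mi e -> K -> K) : Prop :=
  forall x, (forall l : 'I_e, D (mi_unit l) x = 0) <-> exists y, x = y ^+ p.

(** Separability of K -> L in characteristic p: K^(1/p) and L are linearly
    disjoint over K, transported through the Frobenius isomorphism: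
    K-linearly independent l_i have K-linearly independent p-th powers. *)
Definition separable_ext (K L : fieldType) (f : {rmorphism K -> L}) (p : nat) : Prop :=
  forall n (l : 'I_n -> L),
    (forall c : 'I_n -> K, \sum_(i < n) f (c i) * l i = 0 -> forall i, c i = 0) ->
    (forall c : 'I_n -> K, \sum_(i < n) f (c i) * l i ^+ p = 0 -> forall i, c i = 0).

(* Main.v *)
Require Import Defs.
From HB Require Import structures.
From mathcomp Require Import all_boot all_order all_algebra.
Import GRing.Theory.
Local Open Scope ring_scope.

Lemma mi_deg_unit e (l : 'I_e) : mi_deg (mi_unit l) = 1%N.
Proof.
rewrite /mi_deg (bigD1 l) //= big1 ?addn0; first by rewrite ffunE eqxx.
by move=> i /negbTE hi; rewrite ffunE hi.
Qed.

Section Der.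
Set Implicit Arguments.
Unset Strict Implicit.
Variables (k L : fieldType) (iL : {rmorphism k -> L}) (p : nat) (m : option nat) (e : nat).
Variables (D : mi e -> L -> L) (hD : is_HS iL p m D) (l : 'I_e)
  (hr : inrange p m (mi_unit l)).

Lemma D_add x y : D (mi_unit l) (x + y) = D (mi_unit l) x + D (mi_unit l) y.
Proof. by case: hD => _ /(_ _ hr) []. Qed.

Lemma D_zero : D (mi_unit l) 0 = 0.
Proof.
have := D_add 0 0; rewrite addr0 => h.
by apply: (addrI (D (mi_unit l) 0)); rewrite addr0 -h.
Qed.

Lemma D_one : D (mi_unit l) 1 = 0.
Proof.
case: hD => _ /(_ _ hr) [_ _ -> _]; case: eqP => // /ffunP /(_ l).
by rewrite !ffunE eqxx.
Qed.

Lemma D_sum n (F : 'I_n -> L) :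
  D (mi_unit l) (\sum_(i < n) F i) = \sum_(i < n) D (mi_unit l) (F i).
Proof. exact: (big_morph _ D_add D_zero). Qed.

Lemma D_mul x y : D (mi_unit l) (x * y) = x * D (mi_unit l) y + D (mi_unit l) x * y.
Proof.
case: hD => h0 /(_ _ hr) [_ _ _ ->].
have h1 : (1 < (mi_deg (mi_unit l)).+1)%N by rewrite mi_deg_unit.
set j0 : {ffun 'I_e -> 'I_(mi_deg (mi_unit l)).+1} := [ffun => ord0].
set j1 : {ffun 'I_e -> 'I_(mi_deg (mi_unit l)).+1} :=
  [ffun i => if i == l then Ordinal h1 else ord0].
have e0 : mi_of j0 = mi0 e by apply/ffunP => i; rewrite !ffunE.
have e1 : mi_of j1 = mi_unit l by apply/ffunP => i; rewrite !ffunE; case: (i == l).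
have le0 : mi_le (mi_of j0) (mi_unit l) by rewrite /mi_le; apply/forallP => i; rewrite e0 ffunE.
have le1 : mi_le (mi_of j1) (mi_unit l) by rewrite /mi_le; apply/forallP => i; rewrite e1.
have n01 : j1 != j0.
  apply/eqP => /ffunP /(_ l); rewrite !ffunE eqxx => /(congr1 val) //.
rewrite (bigD1 j0) // (bigD1 j1) /=; last by rewrite le1 n01.
rewrite big1 ?addr0.
  rewrite e0 e1 h0.
  have -> : mi_sub (mi_unit l) (mi0 e) = mi_unit l
    by apply/ffunP => i; rewrite !ffunE subn0.
  have -> : mi_sub (mi_unit l) (mi_unit l) = mi0 e
    by apply/ffunP => i; rewrite !ffunE subnn.
  by rewrite h0.
move=> j /andP [/andP [hle2 n0] n1]; exfalso.
have hle : forall i, (mi_of j i <= mi_unit l i)%N.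
  by move=> i; move: hle2; rewrite /mi_le => /forallP; apply.
have hz : forall i, i != l -> j i = ord0.
  move=> i /negbTE hi; apply: val_inj => /=; have := hle i.
  by rewrite !ffunE hi leqn0 => /eqP.
have := hle l; rewrite !ffunE eqxx leq_eqVlt ltnS leqn0.
case/orP => /eqP hl.
- move/eqP: n1; apply; apply/ffunP => i; rewrite !ffunE.
  case: eqP => [->|/eqP /hz //]; exact: val_inj.
- move/eqP: n0; apply; apply/ffunP => i; rewrite !ffunE.
  case: (eqVneq i l) => [->|/hz //]; exact: val_inj.
Qed.

Lemma D_exp x n : D (mi_unit l) (x ^+ n.+1) = x ^+ n * D (mi_unit l) x *+ n.+1.
Proof.
elim: n => [|n IH]; first by rewrite expr1 expr0 mul1r.
rewrite exprS D_mul IH -mulrnAr mulrA -exprS [in RHS]mulrSr.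
by rewrite (mulrC (D _ x)) mulrnAr.
Qed.

Lemma D_pow x : p \in [pchar L] -> D (mi_unit l) (x ^+ p) = 0.
Proof.
move=> hc; have := pcharf_prime hc; case: p hc => // q hc _.
by rewrite D_exp mulrn_pchar.
Qed.
End Der.

Theorem mainTheorem7 (k : fieldType) (p : nat) (hp : prime p) (hchar : p \in [pchar k])
  (e : nat) (Phi : 'I_e -> ps k (e + e)) (hPhi : is_FGL Phi)
  (m : option nat) (hm : forall t, m = Some t -> (0 < t)%N)
  (K L : fieldType) (iK : {rmorphism k -> K}) (iL : {rmorphism k -> L})
  (DK : mi e -> K -> K) (DL : mi e -> L -> L)
  (hK : is_Fder iK p m Phi DK) (hL : is_Fder iL p m Phi DL)
  (f : {rmorphism K -> L}) (hf : forall c, f (iK c) = iL c)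
  (hext : forall i, inrange p m i -> forall x, DL i (f x) = f (DK i x))
  (hstrict : strict p DK) :
  separable_ext f p.
Proof.
move=> n l hl.
have chK : p \in [pchar K] := rmorph_pchar iK hchar.
have chL : p \in [pchar L] := rmorph_pchar iL hchar.
have hpos : (0 < p)%N := prime_gt0 hp.
have hrange : forall lv : 'I_e, inrange p m (mi_unit lv).
  move=> lv; rewrite /inrange; case Em: m => [t|] //; apply/forallP => i; rewrite ffunE.
  apply: (leq_ltn_trans (leq_b1 _)); rewrite -{1}(expn0 p) ltn_exp2l ?prime_gt1 //.
  exact: hm Em.
have hDK := hK.1; have hDL := hL.1.
suff H : forall s (c : 'I_n -> K), leq #|[pred i | c i != 0]| s ->
    \sum_(i < n) f (c i) * l i ^+ p = 0 -> forall i, c i = 0.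
  by move=> c hc; exact: H _ c (leqnn _) hc.
elim=> [|s IH] c hs hc i0.
  apply/eqP; apply: contraT => hi.
  by move: hs; rewrite leqn0 => /eqP /card0_eq /(_ i0); rewrite !inE hi.
apply/eqP; apply: contraT => hi0.
pose c' := fun i => c i / c i0.
have hc' : \sum_(i < n) f (c' i) * l i ^+ p = 0.
  rewrite /c'; under eq_bigr => j _ do rewrite rmorphM fmorphV mulrAC.
  by rewrite -mulr_suml hc mul0r.
have c'i0 : c' i0 = 1 by rewrite /c' divff.
have hD0 : forall lv (i : 'I_n), DK (mi_unit lv) (c' i) = 0.
  move=> lv; apply: IH.
    apply: (@leq_trans #|[predD1 [pred i | c i != 0] & i0]|).
      apply: subset_leq_card; apply/subsetP => i; rewrite !inE => hi.
      apply/andP; split.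
        by apply: contraNneq hi => ->; rewrite c'i0 (D_one hDK (hrange lv)).
      by apply: contraNneq hi => hci; rewrite /c' hci mul0r (D_zero hDK (hrange lv)).
    have := cardD1 i0 [pred i | c i != 0].
    rewrite [i0 \in _]inE hi0 add1n => hh.
    by rewrite -ltnS -hh.
  have := congr1 (DL (mi_unit lv)) hc'.
  rewrite (D_sum hDL (hrange lv)) (D_zero hDL (hrange lv)) => h.
  apply: etrans h; apply: eq_bigr => i _; symmetry.
  by rewrite (D_mul hDL (hrange lv)) (D_pow hDL (hrange lv)) // mulr0 add0r hext.
have hC : forall i, exists y, c' i == y ^+ p.
  move=> i; have [y hy] : exists y, c' i = y ^+ p by apply/hstrict => lv; exact: hD0.
  by exists y; apply/eqP.
pose d := fun i => xchoose (hC i).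
have hd : forall i, c' i = d i ^+ p by move=> i; exact: (eqP (xchooseP (hC i))).
have hsum : \sum_(i < n) f (d i) * l i = 0.
  have : (\sum_(i < n) f (d i) * l i) ^+ p = 0.
    rewrite -(pFrobenius_autE chL) rmorph_sum; apply: etrans hc'; apply: eq_bigr => i _.
    by rewrite /= pFrobenius_autE exprMn -rmorphXn -hd.
  by move/eqP; rewrite expf_eq0 => /andP [_ /eqP].
have := hl d hsum i0.
move: (hd i0); rewrite c'i0 => h1 h0.
by move: h1; rewrite h0 expr0n eqn0Ngt hpos /= => /eqP; rewrite oner_eq0.
Qed.
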